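(* Let $K \ge 1$ be the number of groups, let $c_1,\dots,c_K>0$ be per-sample costs, let $B>0$ be a budget, and let $s>0$ be a step size. For each group $k$, let $M_k:\mathbb{R}_+^K\to\mathbb{R}$ be a (differentiable) learning curve that is concave and increasing, and let the utility of an allocation $\vec n=(n_1,\dots,n_K)\in\mathbb{R}_+^K$ be linear in the group-level performances: $U(\vec n)=\sum_{k=1}^K a_k M_k(\vec n)$ with weights $a_k\ge 0$. Suppose the partial derivatives of the learning curves have no cross-group effects, i.e. for every $j\in\{1,\dots,K\}$ and all $\vec p,\vec q\in\mathbb{R}_+^K$ with $p_j=q_j$, $$\frac{\partial M_k(\vec p)}{\partial n_j}=\frac{\partial M_k(\vec q)}{\partial n_j}\quad\text{for all }1\le k\le K.$$ Consider the greedy algorithm: initialize $\vec n=0$; while $\sum_{k=1}^K c_k n_k< B$, choose $$i^*\in\operatorname{argmax}_{1\le i\le K}\ \sum_{k=1}^K a_k M_k\!\left(\vec n+\tfrac{s}{c_i}\mathbf{1}_i\right),$$ where $\mathbf{1}_i$ is the $i$-th standard basis vector, and update $n_{i^*}\leftarrow n_{i^*}+\tfrac{s}{c_{i^*}}$. Then the allocation produced by the greedy algorithm maximizes $U$ over all feasible allocations $\vec n$ (i.e. those with $\sum_{k=1}^K c_k n_k\le B$) in which each $n_k$ is a nonnegative integer multiple of $\tfrac{s}{c_k}$.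
   Context: A model builder allocates a data-collection budget $B$ across $K$ groups; an allocation $\vec n\in\mathbb{R}_+^K$ specifies how many training samples are collected from each group, and collecting one sample from group $k$ costs $c_k$, so the budget constraint is $\sum_k c_k n_k\le B$. The learning curve $M_k(\vec n)$ is the expected model performance on group $k$ when the model is trained on a dataset with allocation $\vec n$. Each step of the greedy algorithm spends $s$ units of budget, buying $s/c_i$ samples from the chosen group $i$. *)

(* Defs.v *)
From HB Require Import structures.
From mathcomp Require Import all_boot all_order all_algebra.
From mathcomp Require Import all_classical all_reals all_analysis.
Set Implicit Arguments. Unset Strict Implicit. Unset Printing Implicit Defensive.
Import Order.TTheory GRing.Theory Num.Theory numFieldNormedType.Exports.
Local Open Scope ring_scope.

Section AllocDefs.
Context {R : realType} {K : nat}.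

Definition basis_vec (i : 'I_K) : 'rV[R]_K := delta_mx 0 i.

Definition nonneg_vec (p : 'rV[R]_K) : Prop := forall k, 0 <= p 0 k.

Definition cost (c : 'I_K -> R) (n : 'rV[R]_K) : R := \sum_k c k * n 0 k.

Definition concave_on_orthant (M : 'rV[R]_K -> R) : Prop :=
  forall p q (t : R), nonneg_vec p -> nonneg_vec q -> 0 <= t <= 1 ->
    t * M p + (1 - t) * M q <= M (t *: p + (1 - t) *: q).

Definition increasing_on_orthant (M : 'rV[R]_K -> R) : Prop :=
  forall p q : 'rV[R]_K, nonneg_vec p -> (forall k, p 0 k <= q 0 k) -> M p <= M q.

Definition utility (a : 'I_K -> R) (M : 'I_K -> 'rV[R]_K -> R) (n : 'rV[R]_K) : R :=
  \sum_k a k * M k n.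

Definition step (c : 'I_K -> R) (s : R) (i : 'I_K) : 'rV[R]_K := (s / c i) *: basis_vec i.

Definition alloc (c : 'I_K -> R) (s : R) (l : seq 'I_K) : 'rV[R]_K :=
  \sum_(i <- l) step c s i.

(* l is a complete run of the greedy algorithm (with any tie-breaking):
   each choice is made while the budget is not exhausted and maximizes
   U(n + s/c_i 1_i) over i; the loop stops once cost >= B. *)
Definition greedy_run (a : 'I_K -> R) (M : 'I_K -> 'rV[R]_K -> R)
  (c : 'I_K -> R) (B s : R) (l : seq 'I_K) : Prop :=
  (forall l1 i l2, l = l1 ++ i :: l2 ->
     cost c (alloc c s l1) < B /\
     forall j, utility a M (alloc c s l1 + step c s j)
               <= utility a M (alloc c s l1 + step c s i)) /\
  B <= cost c (alloc c s l).

Definition on_grid (c : 'I_K -> R) (s : R) (n : 'rV[R]_K) : Prop :=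
  forall k, exists m : nat, n 0 k = m%:R * (s / c k).

End AllocDefs.

(* Main.v *)
Require Import Defs.
From HB Require Import structures.
From mathcomp Require Import all_boot all_order all_algebra.
From mathcomp Require Import all_classical all_reals all_analysis.
From mathcomp Require Import lra.
Import Order.TTheory GRing.Theory Num.Theory numFieldNormedType.Exports.
Local Open Scope ring_scope.

Lemma line_derive (R : realType) (V : normedModType R) (f : V -> R) (e p : V) (x : R) :
  derivable f (x *: e + p) e ->
  is_derive x 1 (fun u : R => f (u *: e + p)) ('D_e f (x *: e + p)).
Proof.
move=> df.
have E : (fun h : R => h^-1 *: (((fun u : R => f (u *: e + p)) \o shift x) (h *: 1) - f (x *: e + p)))
  = (fun h : R => h^-1 *: ((f \o shift (x *: e + p)) (h *: e) - f (x *: e + p))).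
  apply/funext => h /=; rewrite scaler1 scalerDl addrA.
  by [].
split; first by rewrite /derivable E.
by rewrite /derive E.
Qed.

Lemma nonneg_line (R : realType) (K : nat) (j : 'I_K) (p : 'rV[R]_K) (u : R) :
  nonneg_vec p -> 0 <= u -> nonneg_vec (u *: basis_vec j + p).
Proof.
move=> hp hu k; rewrite !mxE; apply: addr_ge0 => //.
by apply: mulr_ge0 => //; case: (_ && _).
Qed.

Lemma line_coord (R : realType) (K : nat) (j : 'I_K) (p : 'rV[R]_K) (u : R) :
  (u *: basis_vec j + p) 0 j = u + p 0 j.
Proof. by rewrite !mxE !eqxx mulr1. Qed.

Lemma separable (R : realType) (K : nat) (f : 'rV[R]_K -> R) (j : 'I_K)
  (p q : 'rV[R]_K) (t : R) :
  (forall P, nonneg_vec P -> derivable f P (basis_vec j)) ->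
  (forall P Q, nonneg_vec P -> nonneg_vec Q -> P 0 j = Q 0 j ->
     'D_(basis_vec j) f P = 'D_(basis_vec j) f Q) ->
  nonneg_vec p -> nonneg_vec q -> p 0 j = q 0 j -> 0 <= t ->
  f (t *: basis_vec j + p) - f p = f (t *: basis_vec j + q) - f q.
Proof.
move=> hd hD hp hq hpq ht.
set h := fun u : R => f (u *: basis_vec j + p) - f (u *: basis_vec j + q).
have hder : forall x : R, 0 <= x -> is_derive x 1 h
   ('D_(basis_vec j) f (x *: basis_vec j + p) - 'D_(basis_vec j) f (x *: basis_vec j + q)).
  move=> x hx; apply: (@is_deriveB _ R^o R^o); apply: line_derive; apply: hd; exact: nonneg_line.
have h0 : forall x : R, 0 <= x ->
   'D_(basis_vec j) f (x *: basis_vec j + p) - 'D_(basis_vec j) f (x *: basis_vec j + q) = 0.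
  move=> x hx; apply/eqP; rewrite subr_eq0; apply/eqP; apply: hD; try exact: nonneg_line.
  by rewrite !line_coord hpq.
have [c hc E] : exists2 c, c \in `[0, t]%R & h t - h 0 =
  (fun x => 'D_(basis_vec j) f (x *: basis_vec j + p) - 'D_(basis_vec j) f (x *: basis_vec j + q)) c * (t - 0).
  apply: MVT_segment => //.
    by move=> x; rewrite in_itv /= => /andP[/ltW hx _]; apply: hder.
  apply: derivable_within_continuous => x; rewrite in_itv /= => /andP[hx _].
  by have [] := hder x hx.
move: E; rewrite /= h0; last by move: hc; rewrite in_itv /= => /andP[].
rewrite mul0r /h !scale0r !add0r => /eqP; rewrite subr_eq0 => /eqP E.
lra.
Qed.

Section Main.
Variables (R : realType) (K : nat) (hK : (0 < K)%N) (c : 'I_K -> R) (s : R)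
  (a : 'I_K -> R) (M : 'I_K -> 'rV[R]_K -> R).
Hypotheses (hc : forall k, 0 < c k) (hs : 0 < s) (ha : forall k, 0 <= a k)
  (hconc : forall k, concave_on_orthant (M k))
  (hinc : forall k, increasing_on_orthant (M k))
  (hder : forall k j p, nonneg_vec p -> derivable (M k) p (basis_vec j))
  (hD : forall j p q, nonneg_vec p -> nonneg_vec q -> p 0 j = q 0 j ->
     forall k, 'D_(basis_vec j) (M k) p = 'D_(basis_vec j) (M k) q).

Local Notation U := (utility a M).
Definition Dl j p := U (p + step c s j) - U p.
Definition P j (r : nat) : 'rV[R]_K := (r%:R * (s / c j)) *: basis_vec j.
Definition d j r := Dl j (P j r).
Definition F j (x : nat) := \sum_(0 <= r < x) d j r.

Lemma ts_ge0 j : 0 <= s / c j.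
Proof. by rewrite divr_ge0 // ltW. Qed.

Lemma Dl_sum j p : Dl j p = \sum_k a k * (M k (p + step c s j) - M k p).
Proof. by rewrite /Dl /utility -sumrB; apply: eq_bigr => k _; rewrite mulrBr. Qed.

Lemma Dl_sep j p q : nonneg_vec p -> nonneg_vec q -> p 0 j = q 0 j -> Dl j p = Dl j q.
Proof.
move=> hp hq hpq; rewrite !Dl_sum; apply: eq_bigr => k _; congr (_ * _).
rewrite /step ![_ + (_ *: basis_vec j)]addrC; apply: separable => //.
- by move=> Q hQ; apply: hder.
- by move=> P0 Q hP hQ h; apply: hD.
- exact: ts_ge0.
Qed.

Lemma P_nonneg j r : nonneg_vec (P j r).
Proof.
move=> k; rewrite !mxE; apply: mulr_ge0; first by apply: mulr_ge0 => //; exact: ts_ge0.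
by case: (_ && _).
Qed.

Lemma P_coord j r : P j r 0 j = r%:R * (s / c j).
Proof. by rewrite !mxE !eqxx mulr1. Qed.

Lemma alloc_coord l k : alloc c s l 0 k = (count_mem k l)%:R * (s / c k).
Proof.
elim: l => [|i l IH]; first by rewrite /alloc big_nil mxE mul0r.
rewrite /alloc big_cons mxE -/(alloc c s l) IH /step !mxE /=.
case: (eqVneq i k) => [->|ne]; first by rewrite mulr1 natrD mulrDl mul1r.
by rewrite mulr0 add0r add0n.
Qed.

Lemma alloc_nonneg l : nonneg_vec (alloc c s l).
Proof. by move=> k; rewrite alloc_coord; apply: mulr_ge0 => //; exact: ts_ge0. Qed.

Lemma Dl_alloc j l : Dl j (alloc c s l) = d j (count_mem j l).
Proof.
apply: Dl_sep; [exact: alloc_nonneg|exact: P_nonneg|].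
by rewrite alloc_coord P_coord.
Qed.

Lemma Dl_ge0 j p : nonneg_vec p -> 0 <= Dl j p.
Proof.
move=> hp; rewrite Dl_sum; apply: sumr_ge0 => k _; apply: mulr_ge0 => //.
rewrite subr_ge0; apply: hinc => // i; rewrite mxE lerDl /step !mxE.
by apply: mulr_ge0; [exact: ts_ge0|case: (_ && _)].
Qed.

Lemma d_ge0 j r : 0 <= d j r.
Proof. exact/Dl_ge0/P_nonneg. Qed.

Lemma Dl_concave j p : nonneg_vec p -> Dl j (p + step c s j) <= Dl j p.
Proof.
move=> hp; rewrite !Dl_sum; apply: ler_sum => k _; apply: ler_wpM2l => //.
have hst : nonneg_vec (step c s j).
  by move=> i; rewrite /step !mxE; apply: mulr_ge0; [exact: ts_ge0|case: (_ && _)].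
have hq : nonneg_vec (p + step c s j + step c s j).
  move=> i; rewrite !mxE; apply: addr_ge0; [apply: addr_ge0|]; [exact: hp| |];
  by apply: mulr_ge0; [exact: ts_ge0|case: (_ && _)].
have := @hconc k p _ (2^-1) hp hq.
have -> : (2^-1 : R) *: p + (1 - 2^-1) *: (p + step c s j + step c s j) = p + step c s j.
  apply/rowP => i; rewrite !mxE; lra.
have h2 : 0 <= (2^-1 : R) <= 1 by apply/andP; split; lra.
move=> /(_ h2) h; lra.
Qed.

Lemma P_succ j r : P j r.+1 = P j r + step c s j.
Proof. by rewrite /P /step -scalerDl mulrSr mulrDl mul1r. Qed.

Lemma d_succ j r : d j r.+1 <= d j r.
Proof. by rewrite /d P_succ; apply/Dl_concave/P_nonneg. Qed.

Lemma d_mono j r r' : (r <= r')%N -> d j r' <= d j r.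
Proof.
elim: r' => [|r' IH]; first by rewrite leqn0 => /eqP->.
rewrite leq_eqVlt ltnS => /orP[/eqP->//|/IH h].
exact: le_trans (d_succ _ _) h.
Qed.

Lemma alloc_rcons l x : alloc c s (rcons l x) = alloc c s l + step c s x.
Proof. by rewrite /alloc -cats1 big_cat big_seq1. Qed.

Lemma count_rcons' (l : seq 'I_K) x j : count_mem j (rcons l x) = (count_mem j l + (x == j))%N.
Proof. by rewrite -cats1 count_cat /= addn0. Qed.

Lemma U_alloc l : U (alloc c s l) = U 0 + \sum_j F j (count_mem j l).
Proof.
elim/last_ind: l => [|l x IH].
  rewrite /alloc big_nil big1 ?addr0 // => j _.
  by rewrite /F big_geq.
rewrite alloc_rcons.
have -> : U (alloc c s l + step c s x) = U (alloc c s l) + Dl x (alloc c s l).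
  by rewrite /Dl; lra.
rewrite IH Dl_alloc -addrA; congr (_ + _).
rewrite (bigD1 x) //= [in RHS](bigD1 x) //= count_rcons' eqxx addn1.
rewrite /F big_nat_recr //= -/(F x _) addrAC; congr (_ + _).
apply: eq_bigr => j hj; rewrite count_rcons'.
by rewrite eq_sym (negbTE hj) addn0.
Qed.

Lemma exists_list (m : 'I_K -> nat) : exists l, forall k, count_mem k l = m k.
Proof.
exists (flatten [seq nseq (m j) j | j <- enum 'I_K]) => k.
rewrite count_flatten -map_comp sumnE big_map big_enum /=.
rewrite (bigD1 k) //= count_nseq /= eqxx mul1n big1 ?addn0 // => j hj.
by rewrite count_nseq /= (negbTE hj).
Qed.

Lemma sum_count (l : seq 'I_K) : (\sum_k count_mem k l)%N = size l.
Proof.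
elim: l => [|i l IH] /=; first by rewrite big1.
rewrite big_split /= IH (bigD1 i) //= eqxx big1 // => j hj.
by rewrite eq_sym (negbTE hj).
Qed.

Lemma cost_alloc l : cost c (alloc c s l) = (size l)%:R * s.
Proof.
rewrite /cost.
have e k : c k * alloc c s l 0 k = (count_mem k l)%:R * s.
  by rewrite alloc_coord mulrCA [c k * (s / c k)]mulrCA mulfV ?mulr1 ?gt_eqF.
under eq_bigr => k _ do rewrite e.
by rewrite -mulr_suml -natr_sum sum_count.
Qed.


Definition greedy_ok (l : seq 'I_K) := forall l1 i l2, l = l1 ++ i :: l2 ->
  forall j, d j (count_mem j l1) <= d i (count_mem i l1).

Lemma invariant l : greedy_ok l ->
  forall j x r, (r < count_mem j l)%N -> d x (count_mem x l) <= d j r.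
Proof.
elim/last_ind: l => [|l i IH] hg j x r //.
have hg' : greedy_ok l.
  move=> l1 i' l2 E; apply: (hg l1 i' (rcons l2 i)).
  by rewrite E rcons_cat.
have hgi : forall y, d y (count_mem y l) <= d i (count_mem i l).
  by apply: (hg l i [::]); rewrite cats1.
rewrite !count_rcons' => hr.
have hx : d x (count_mem x l + (i == x)) <= d x (count_mem x l) by apply: d_mono; exact: leq_addr.
apply: le_trans hx _.
case: (ltnP r (count_mem j l)) => hr'; first exact: IH.
move: hr; case: (eqVneq i j) => [eij|_]; last by rewrite addn0 ltnNge hr'.
rewrite addn1 ltnS => hr2.
have -> : r = count_mem j l by apply/eqP; rewrite eqn_leq hr2 hr'.
by rewrite -eij.
Qed.

Lemma F_bound (f : nat -> R) (th : R) (y x : nat) :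
  (forall r, (r < y)%N -> th <= f r) -> (forall r, (y <= r)%N -> f r <= th) ->
  \sum_(0 <= r < x) f r - \sum_(0 <= r < y) f r <= th * (x%:R - y%:R).
Proof.
move=> lo hi; case: (leqP y x) => hxy.
  rewrite (big_cat_nat (leq0n y) hxy) /= addrAC subrr add0r -natrB // mulr_natr.
  rewrite -sumr_const_nat; apply: ler_sum_nat => r /andP[h1 _]; exact: hi.
rewrite (big_cat_nat (leq0n x) (ltnW hxy)) /= opprD addrA subrr add0r.
rewrite -opprB mulrN lerN2 -natrB ?(ltnW hxy) // mulr_natr.
rewrite -sumr_const_nat; apply: ler_sum_nat => r /andP[_ h2]; exact: lo.
Qed.

Lemma opt l (m : 'I_K -> nat) : greedy_ok l -> (\sum_k m k <= size l)%N ->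
  \sum_j F j (m j) <= \sum_j F j (count_mem j l).
Proof.
move=> hg hm.
pose g j := count_mem j l.
pose x0 := [arg max_(i > Ordinal hK) d i (g i)]%O.
have hx0 : forall y, d y (g y) <= d x0 (g x0).
  by rewrite /x0; case: arg_maxP => // i _ h y; apply: h.
pose th := d x0 (g x0).
have key : forall j, F j (m j) - F j (g j) <= th * ((m j)%:R - (g j)%:R).
  move=> j; apply: F_bound.
    by move=> r hr; apply: invariant.
  by move=> r hr; apply: le_trans (hx0 j); apply: d_mono.
have h : \sum_j (F j (m j) - F j (g j)) <= \sum_j th * ((m j)%:R - (g j)%:R).
  by apply: ler_sum => j _; exact: key.
rewrite -mulr_sumr !sumrB -!natr_sum in h.
rewrite -subr_le0; apply: le_trans h _.
apply: mulr_ge0_le0; first exact: d_ge0.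
by rewrite subr_le0 ler_nat /g sum_count.
Qed.

Lemma main_sec (B : R) l : 0 < B -> greedy_run a M c B s l ->
    on_grid c s (alloc c s l) /\
    (forall n : 'rV[R]_K, on_grid c s n -> cost c n <= B ->
       utility a M n <= utility a M (alloc c s l)) /\
    ((exists m : nat, B = m%:R * s) -> cost c (alloc c s l) <= B).
Proof.
move=> hB [hg hfin].
have hgo : greedy_ok l.
  move=> l1 i l2 E j; have [_ h] := hg l1 i l2 E.
  by rewrite -!Dl_alloc /Dl lerD2r.
split; first by move=> k; exists (count_mem k l); exact: alloc_coord.
split.
  move=> n hn hcost.
  have [m hm] := choice hn.
  have [l' hl'] := exists_list m.
  have En : n = alloc c s l'.
    by apply/rowP => k; rewrite alloc_coord hl' hm.
  rewrite {}En in hcost *.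
  rewrite !U_alloc lerD2l.
  under eq_bigr => j _ do rewrite hl'.
  apply: opt => //.
  have -> : (\sum_k m k)%N = size l' by rewrite -sum_count; apply: eq_bigr => k _; rewrite hl'.
  by move: (le_trans hcost hfin); rewrite !cost_alloc ler_pM2r // ler_nat.
move=> [m hm].
move: hg hfin hgo; case/lastP: l => [|l1 x] hg hfin hgo.
  by move: hfin; rewrite cost_alloc /= mul0r => /(lt_le_trans hB); rewrite ltxx.
have [h1 _] := hg l1 x [::] (esym (cats1 l1 x)).
move: h1; rewrite !cost_alloc hm ltr_pM2r // ltr_nat size_rcons => h1.
by rewrite ler_pM2r // ler_nat.
Qed.

End Main.

Theorem theorem4p1 (R : realType) (K : nat) (hK : (0 < K)%N)
  (c : 'I_K -> R) (B s : R) (a : 'I_K -> R) (M : 'I_K -> 'rV[R]_K -> R) :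
  (forall k, 0 < c k) -> 0 < B -> 0 < s ->
  (forall k, 0 <= a k) ->
  (forall k, concave_on_orthant (M k)) ->
  (forall k, increasing_on_orthant (M k)) ->
  (forall k j p, nonneg_vec p -> derivable (M k) p (basis_vec j)) ->
  (forall j p q, nonneg_vec p -> nonneg_vec q -> p 0 j = q 0 j ->
     forall k, 'D_(basis_vec j) (M k) p = 'D_(basis_vec j) (M k) q) ->
  forall l : seq 'I_K, greedy_run a M c B s l ->
    on_grid c s (alloc c s l) /\
    (forall n : 'rV[R]_K, on_grid c s n -> cost c n <= B ->
       utility a M n <= utility a M (alloc c s l)) /\
    ((exists m : nat, B = m%:R * s) -> cost c (alloc c s l) <= B).
Proof.
move=> hc hB hs ha hconc hinc hder hD l hl.
exact: (@main_sec R K hK c s a M hc hs ha hconc hinc hder hD B l hB hl).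
Qed.
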